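(* Let $q\ge2$ be a prime power, $d\ge6$ and $2\le j\le d$. Then $|Q_j(d-1)|>|Q_j(d)|$, except possibly when $q=2$ and ($j=d$ or $j$ is even). In that exceptional case ($q=2$ and $j=d$ or $j$ even), $|Q_j(d-2)|>|Q_j(d)|$.
   Context: Let $b=-q$. For integers $m\ge0$ and $l$, ${m\brack l}_b=\prod_{t=1}^{l}\frac{b^{m-t+1}-1}{b^t-1}$ for $l\ge0$ and $0$ for $l<0$. For $0\le i,j\le d$, $$Q_j(i)=\sum_{h=0}^{\min\{j,d-i\}}(-1)^j(-q)^{\binom{j-h}{2}+hd}{d-h\brack d-j}_b{d-i\brack h}_b,$$ the eigenvalues of the Hermitian forms graph $Q_q(d,j)$. *)

(* Defs.v *)
From mathcomp Require Import all_boot all_order all_algebra.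
Set Implicit Arguments. Unset Strict Implicit. Unset Printing Implicit Defensive.
Import Order.TTheory GRing.Theory Num.Theory.
Local Open Scope ring_scope.

Definition prime_power (q : nat) : Prop :=
  exists p k : nat, prime p /\ (0 < k)%N /\ q = (p ^ k)%N.

Definition gbin (b : rat) (m : nat) (l : int) : rat :=
  match l with
  | Posz n => \prod_(1 <= t < n.+1) ((b ^ ((m%:Z) - (t%:Z) + 1) - 1) / (b ^+ t - 1))
  | Negz _ => 0
  end.

(* Eigenvalue Q_j(i) of the Hermitian forms graph Q_q(d,j), with b = -q. *)
Definition Qeig (q d j i : nat) : rat :=
  let b : rat := - (q%:R) in
  \sum_(0 <= h < (minn j (d - i)).+1)
     (-1) ^+ j * b ^+ ('C(j - h, 2) + h * d)
     * gbin b (d - h) ((d%:Z) - (j%:Z)) * gbin b (d - i) (h%:Z).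

(* Main.v *)
Require Import Defs.
From mathcomp Require Import all_boot all_order all_algebra ring lra zify.
Import Order.TTheory GRing.Theory Num.Theory.
Local Open Scope ring_scope.

Definition gg (b : rat) (m k : nat) : rat :=
  \prod_(1 <= t < k.+1) ((b ^+ (m.+1 - t) - 1) / (b ^+ t - 1)).

Lemma gbinE b m k : (k <= m)%N -> gbin b m k%:Z = gg b m k.
Proof.
move=> km; rewrite /gbin /gg; apply: eq_big_nat => t /andP[t1 tk].
have -> : (m%:Z - t%:Z + 1) = (m.+1 - t)%N%:Z.
  rewrite -subzn; last by apply: leq_trans (ltnW tk) _.
  by rewrite -addn1 PoszD; ring.
by [].
Qed.

Lemma gg0 b m : gg b m 0 = 1.
Proof. by rewrite /gg big_geq. Qed.

Lemma ggS b m k : gg b m k.+1 = gg b m k * ((b ^+ (m - k) - 1) / (b ^+ k.+1 - 1)).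
Proof. by rewrite /gg big_nat_recr //= subSS. Qed.

Lemma ggrel b n k : (k <= n)%N ->
  gg b n.+1 k * (b ^+ (n.+1 - k) - 1) = gg b n k * (b ^+ n.+1 - 1).
Proof.
elim: k => [|k IH] kn; first by rewrite !gg0 subn0.
rewrite !ggS subSS.
have IH' := IH (ltnW kn).
have -> : (n.+1 - k = (n - k).+1)%N by rewrite subSn // ltnW.
rewrite subSn in IH'; last exact: ltnW kn.
transitivity (gg b n.+1 k * (b ^+ (n - k).+1 - 1) * ((b ^+ (n - k) - 1) / (b ^+ k.+1 - 1))); first by ring.
rewrite IH'; ring.
Qed.

Lemma bpow_neq1 (q n : nat) : (2 <= q)%N -> (0 < n)%N -> (- q%:R : rat) ^+ n - 1 != 0.
Proof.
move=> q2 n0; rewrite subr_eq0; apply/negP => /eqP/(congr1 (fun x => `|x|)).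
rewrite normrX normrN normr1 ger0_norm ?ler0n // => h.
have hq : (2%:R : rat) <= q%:R by rewrite ler_nat.
have : (q%:R : rat) <= q%:R ^+ n.
  by rewrite -[X in X <= _]expr1 ler_eXn2l // (lt_le_trans _ hq) // ltr1n.
rewrite h => h1.
by have := le_trans hq h1; rewrite -[X in _ <= X]/(1%:R) ler_nat.
Qed.

Lemma gg_neq0 q m k : (2 <= q)%N -> (k <= m)%N -> gg (- q%:R) m k != 0.
Proof.
move=> q2 km; rewrite /gg big_nat_cond prodf_seq_neq0; apply/allP => t _.
apply/implyP => /andP[/andP[t1 tk] _].
rewrite mulf_neq0 // ?invr_eq0 bpow_neq1 //; first by rewrite subn_gt0 ltnS (leq_trans _ km).
Qed.
Section S.
Variables (q d j : nat).
Hypotheses (q2 : (2 <= q)%N) (d6 : (6 <= d)%N) (j2 : (2 <= j)%N) (jd : (j <= d)%N).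
Let b : rat := - q%:R.

Lemma bm1 : b - 1 != 0.
Proof. by rewrite -[b]expr1 bpow_neq1. Qed.

Lemma b2m1 : b ^+ 2 - 1 != 0.
Proof. by rewrite bpow_neq1. Qed.

Lemma dz : (d%:Z - j%:Z) = (d - j)%N%:Z.
Proof. by rewrite subzn. Qed.

Lemma QdE : Qeig q d j d = (-1) ^+ j * b ^+ 'C(j, 2) * gg b d (d - j).
Proof.
rewrite /Qeig subnn minn0 big_nat1 dz !gbinE ?leq_subr // subn0.
  rewrite mul0n addn0 [gg _ 0 0]/gg big_geq // mulr1 subn0 //.
exact: leq_subr.
Qed.

Lemma gg11 : gg b 1 1 = 1.
Proof. by rewrite /gg big_nat1 /= expr1 divff // bm1. Qed.

Lemma gg21 : gg b 2 1 = b + 1.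
Proof.
rewrite /gg big_nat1 expr1 /=.
have -> : b ^+ 2 - 1 = (b - 1) * (b + 1) by ring.
by rewrite mulrC mulKf // bm1.
Qed.

Lemma gg22 : gg b 2 2 = 1.
Proof.
rewrite /gg big_nat_recr // big_nat1 /= expr1.
have h1 := bm1; have h2 := b2m1.
rewrite (_ : (3 - 1)%N = 2%N) //.
move: h1 h2; generalize b => c h1 h2; field.
by rewrite h1 h2.
Qed.

Lemma Qd1E : Qeig q d j (d - 1) =
  (-1) ^+ j * b ^+ 'C(j, 2) * gg b d (d - j)
  + (-1) ^+ j * b ^+ ('C(j - 1, 2) + d) * gg b (d - 1) (d - j).
Proof.
rewrite /Qeig.
have -> : (minn j (d - (d - 1))).+1 = 2%N by lia.
rewrite (_ : d - (d - 1) = 1)%N; last lia.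
rewrite big_nat_recr // big_nat1 dz !gbinE; try lia.
by rewrite !subn0 mul0n addn0 mul1n gg0 gg11 !mulr1.
Qed.

Lemma Qd2E : Qeig q d j (d - 2) =
  (-1) ^+ j * b ^+ 'C(j, 2) * gg b d (d - j)
  + (-1) ^+ j * b ^+ ('C(j - 1, 2) + d) * gg b (d - 1) (d - j) * (b + 1)
  + (-1) ^+ j * b ^+ ('C(j - 2, 2) + 2 * d) * gg b (d - 2) (d - j).
Proof.
rewrite /Qeig.
have -> : (minn j (d - (d - 2))).+1 = 3%N by lia.
rewrite (_ : d - (d - 2) = 2)%N; last lia.
rewrite big_nat_recr // big_nat_recr // big_nat1 dz !gbinE; try lia.
by rewrite !subn0 mul0n addn0 mul1n gg0 gg21 gg22 !mulr1.
Qed.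
End S.

Lemma lt_abs (X Y : rat) : X < Y -> - X < Y -> `|X| < `|Y|.
Proof.
move=> h1 h2; apply: (lt_le_trans _ (ler_norm Y)).
by rewrite ltr_norml h1 andbT -ltrN2 opprK.
Qed.

Lemma lt_absN (X Y : rat) : X < - Y -> - X < - Y -> `|X| < `|Y|.
Proof. by move=> h1 h2; rewrite -(normrN Y); apply: lt_abs. Qed.

Lemma sgn (n : nat) : (-1 : rat) ^+ n = if odd n then -1 else 1.
Proof. by rewrite -signr_odd; case: (odd n); rewrite ?expr1 ?expr0. Qed.

Lemma bpow (q n : nat) : (- q%:R : rat) ^+ n = (-1) ^+ n * q%:R ^+ n.
Proof. exact: exprNn. Qed.

Lemma ineq1 (q m k : nat) : (2 <= q)%N -> (1 <= m)%N ->
  ~ (q = 2%N /\ (k = 0%N \/ odd m)) ->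
  `|(- q%:R : rat) ^+ m * ((- q%:R) ^+ (m.+1 + k) - 1)| <
  `|(- q%:R : rat) ^+ m * ((- q%:R) ^+ (m.+1 + k) - 1) + (- q%:R) ^+ (m.+1 + k) * ((- q%:R) ^+ m.+1 - 1)|.
Proof.
move=> q2 m1 nex.
rewrite !bpow !exprD !exprS !sgn.
have hQ : (2%:R : rat) <= q%:R by rewrite ler_nat.
have hM : (q%:R : rat) <= q%:R ^+ m.
  by rewrite -[X in X <= _]expr1 ler_eXn2l // (lt_le_trans _ hQ).
have hK : (1 : rat) <= q%:R ^+ k by rewrite exprn_ege1 // (le_trans _ hQ).
set Q := (q%:R : rat) in hQ hM hK *; set M := Q ^+ m in hM *; set K := Q ^+ k in hK *.
have hQ0 : 0 <= Q by apply: le_trans hQ.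
have hM0 : 0 <= M by apply: le_trans hM.
have hMK : Q <= M * K.
  by rewrite -[Q]mulr1 ler_pM.
have hQMK : 2%:R * 2%:R <= Q * (M * K).
  by rewrite ler_pM // (le_trans hQ).
case: (odd m) nex; case: (odd k) => nex.
all: try rewrite ?mulN1r ?mul1r.
all: have hP : Q * M <= Q * M * K by rewrite -[X in X <= _]mulr1 ler_pM // mulr_ge0.
all: set P := Q * M * K in hP *.
all: have hQM : Q * Q <= Q * M by rewrite ler_pM.
all: have hQM0 : 2%:R * 2%:R <= Q * M by apply: le_trans hQM; rewrite ler_pM.
all: have hMP : 0 <= M * P by apply: mulr_ge0 => //; lra.
- have hq3 : (3%:R : rat) <= Q.
    rewrite ler_nat; case: (ltnP 2 q) => // hq; exfalso; apply: nex; split; [lia | by right].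
  have h1 : 0 <= (Q - 3%:R) * (M * P) by apply: mulr_ge0; lra.
  have h2 : 0 <= (M - 1) * (P - 2%:R) by apply: mulr_ge0; nra.
  apply: lt_absN; nra.
- have hq3 : (3%:R : rat) <= Q.
    rewrite ler_nat; case: (ltnP 2 q) => // hq; exfalso; apply: nex; split; [lia | by right].
  have h1 : 0 <= (Q - 3%:R) * (M * P) by apply: mulr_ge0; lra.
  have h2 : 0 <= (M - 1) * P by apply: mulr_ge0; nra.
  have h3 : 0 < P * (Q * M - 1) by apply: mulr_gt0; nra.
  apply: lt_abs; nra.
- have h1 : 0 <= (Q - 2%:R) * (M * P) by apply: mulr_ge0; lra.
  have h3 : 0 < P * (Q * M + 1) by apply: mulr_gt0; nra.
  apply: lt_absN; nra.
- have h1 : 0 <= (Q - 2%:R) * (M * P) by apply: mulr_ge0; lra.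
  have h3 : 0 < P * (Q * M + 1) by apply: mulr_gt0; nra.
  have [hq3|hKQ] : (3%:R : rat) <= Q \/ Q * M * Q <= P.
    case: (ltnP 2 q) => hq; [left; by rewrite ler_nat | right].
    have q2' : q = 2%N by apply/eqP; rewrite eqn_leq hq q2.
    have k0 : (0 < k)%N.
      by case: (posnP k) => // k0'; exfalso; apply: nex; split; [exact q2' | left].
    rewrite /P ler_pM // ?mulr_ge0 //.
    by rewrite -[X in X <= _]expr1 /K ler_eXn2l // (lt_le_trans _ hQ).
  + have h4 : 0 <= (Q - 3%:R) * (M * P) by apply: mulr_ge0; lra.
    have h5 : 0 <= M * (P - 2%:R) by apply: mulr_ge0; nra.
    apply: lt_abs; nra.
  + have h4 : 0 <= (Q - 2%:R) * (Q * M) by apply: mulr_ge0; nra.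
    apply: lt_abs; nra.
Qed.

Lemma abs_scale (x y ka ks kc : rat) : 0 < kc -> x = kc * ka -> y = kc * ks ->
  `|ka| < `|ks| -> `|x| < `|y|.
Proof. by move=> c0 -> -> h; rewrite !normrM ltr_pM2l // normr_gt0 gt_eqF. Qed.

Lemma ineq2 (m k : nat) : (k = 0%N /\ (4 <= m)%N) \/ ~~ odd m ->
  `|(- 2%:R : rat) ^+ (m + m).+1 * ((- 2%:R) ^+ (m.+1 + k) - 1) * ((- 2%:R) ^+ (m.+2 + k) - 1)| <
  `|(- 2%:R : rat) ^+ (m + m).+1 * ((- 2%:R) ^+ (m.+1 + k) - 1) * ((- 2%:R) ^+ (m.+2 + k) - 1)
    + (- 2%:R) ^+ (m + (m.+2 + k)) * (- 2%:R + 1) * ((- 2%:R) ^+ (m.+1 + k) - 1) * ((- 2%:R) ^+ m.+2 - 1)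
    + (- 2%:R) ^+ ((m.+2 + k) + (m.+2 + k)) * ((- 2%:R) ^+ m.+1 - 1) * ((- 2%:R) ^+ m.+2 - 1)|.
Proof.
move=> H.
rewrite !bpow !exprD !exprS !exprD !sgn ?oddD ?addbb.
set M := (2%:R : rat) ^+ m; set K := (2%:R : rat) ^+ k.
have hM : 1 <= M by rewrite exprn_ege1 // ler1n.
have hK : 1 <= K by rewrite exprn_ege1 // ler1n.
have hM2 : 0 < M ^+ 2 by rewrite exprn_gt0 // (lt_le_trans _ hM).
have hMK : 1 <= M * K by rewrite -[1]mulr1 ler_pM.
case: H => [[k0 m4]|mev].
- have -> : K = 1 by rewrite /K k0 expr0.
  have h16 : 2%:R ^+ 4 <= M by rewrite /M ler_eXn2l // ltr1n.
  rewrite k0 /=.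
  case: (odd m).
  + apply: (@abs_scale _ _ ( 2%:R * (2%:R * M - 1) * (4%:R * M + 1))
      ( - 10%:R * (2%:R * M - 1) * (4%:R * M + 1)) (M ^+ 2)) => //; try ring.
    apply: lt_absN; nra.
  + apply: (@abs_scale _ _ ( 2%:R * (2%:R * M + 1) * (4%:R * M - 1))
      ( 2%:R * (2%:R * M + 1) * (4%:R * M - 1) + 4%:R * (2%:R * M + 1) * (4%:R * M - 1)
            - 16%:R * (2%:R * M + 1) * (4%:R * M - 1)) (M ^+ 2)) => //; try ring.
    apply: lt_absN; nra.
- rewrite (negbTE mev).
  case: (odd k).
  + apply: (@abs_scale _ _ ( 2%:R * (- 2%:R * M * K + 1) * (- 4%:R * M * K - 1))
      ( 2%:R * (- 2%:R * M * K + 1) * (- 4%:R * M * K - 1)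
          - 4%:R * K * (- 2%:R * M * K + 1) * (4%:R * M - 1)
          - 16%:R * K ^+ 2 * (2%:R * M + 1) * (4%:R * M - 1)) (M ^+ 2)) => //; try ring.
    apply: lt_absN; nra.
  + apply: (@abs_scale _ _ ( 2%:R * (2%:R * M * K + 1) * (4%:R * M * K - 1))
      ( 2%:R * (2%:R * M * K + 1) * (4%:R * M * K - 1)
          + 4%:R * K * (2%:R * M * K + 1) * (4%:R * M - 1)
          - 16%:R * K ^+ 2 * (2%:R * M + 1) * (4%:R * M - 1)) (M ^+ 2)) => //; try ring.
    apply: lt_absN; nra.
Qed.

Lemma abs_scale2 (x y ka ks kc nn : rat) : nn != 0 -> kc != 0 ->
  x * nn = kc * ka -> y * nn = kc * ks -> `|ka| < `|ks| -> `|x| < `|y|.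
Proof.
move=> n0 c0 ex ey h.
have hn : 0 < `|nn| by rewrite normr_gt0.
rewrite -(ltr_pM2r hn) -!normrM ex ey !normrM ltr_pM2l //.
by rewrite normr_gt0.
Qed.

Lemma bnz (q n : nat) : (2 <= q)%N -> (- q%:R : rat) ^+ n != 0.
Proof. by move=> q2; rewrite expf_neq0 // oppr_eq0 pnatr_eq0 -lt0n (leq_trans _ q2). Qed.

Lemma sgnz (n : nat) : (-1 : rat) ^+ n != 0.
Proof. by rewrite sgn; case: (odd n); rewrite ?oppr_eq0 oner_eq0. Qed.

Theorem lemma5p6 (q d j : nat) :
  prime_power q -> (6 <= d)%N -> (2 <= j)%N -> (j <= d)%N ->
  (~ (q = 2%N /\ (j = d \/ ~~ odd j)) ->
     `|Qeig q d j d| < `|Qeig q d j (d - 1)|)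
  /\
  ((q = 2%N /\ (j = d \/ ~~ odd j)) ->
     `|Qeig q d j d| < `|Qeig q d j (d - 2)|).
Proof.
move=> [p [e [pp [e0 qe]]]] d6 j2 jd.
have q2 : (2 <= q)%N.
  rewrite qe (leq_trans (prime_gt1 pp)) //.
  by rewrite -{1}(expn1 p) leq_pexp2l // prime_gt0.
split.
- move=> nex.
  rewrite QdE ?Qd1E //.
  have [m jm] : exists m, j = m.+1 by exists j.-1; lia.
  have [k dk] : exists k, d = (m.+1 + k)%N by exists (d - m.+1)%N; lia.
  rewrite jm dk.
  have -> : (m.+1 + k - m.+1 = k)%N by lia.
  have -> : (m.+1 + k - 1 = m + k)%N by lia.
  have -> : (m.+1 - 1 = m)%N by lia.
  rewrite binS bin1.
  have rel := ggrel (- q%:R) (m + k)%N k (leq_addl m k).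
  rewrite (_ : ((m + k).+1 - k = m.+1)%N) in rel; last lia.
  rewrite -addSn in rel.
  apply: (@abs_scale2 _ _ ((- q%:R) ^+ m * ((- q%:R) ^+ (m.+1 + k) - 1))
     ((- q%:R) ^+ m * ((- q%:R) ^+ (m.+1 + k) - 1) + (- q%:R) ^+ (m.+1 + k) * ((- q%:R) ^+ m.+1 - 1))
     ((-1) ^+ m.+1 * (- q%:R) ^+ 'C(m, 2) * gg (- q%:R) (m + k) k)
     ((- q%:R) ^+ m.+1 - 1)).
  + exact: bpow_neq1.
  + apply: mulf_neq0; [apply: mulf_neq0; [exact: sgnz | exact: bnz] | apply: gg_neq0 => //; lia].
  + rewrite !(exprD _ (binomial m 2)).
    transitivity ((-1) ^+ m.+1 * (- q%:R) ^+ 'C(m, 2) * (- q%:R) ^+ m *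
       (gg (- q%:R) (m.+1 + k) k * ((- q%:R) ^+ m.+1 - 1))); first by ring.
    rewrite rel; ring.
  + rewrite !(exprD _ (binomial m 2)).
    transitivity ((-1) ^+ m.+1 * (- q%:R) ^+ 'C(m, 2) * (- q%:R) ^+ m *
       (gg (- q%:R) (m.+1 + k) k * ((- q%:R) ^+ m.+1 - 1))
       + (-1) ^+ m.+1 * (- q%:R) ^+ 'C(m, 2) * (- q%:R) ^+ (m.+1 + k) *
       gg (- q%:R) (m + k) k * ((- q%:R) ^+ m.+1 - 1)); first by ring.
    rewrite rel; ring.
  + apply: ineq1 => //; first lia.
    move=> [hq [hk|hm]]; apply: nex; split => //; [left; lia | right].
    by rewrite jm /= hm.
- move=> [q2e hex].
  rewrite QdE ?Qd2E //.
  have [m jm] : exists m, j = m.+2 by exists (j - 2)%N; lia.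
  have [k dk] : exists k, d = (m.+2 + k)%N by exists (d - m.+2)%N; lia.
  have H2 : (k = 0%N /\ (4 <= m)%N) \/ ~~ odd m.
    case: hex => [jd'|ev]; [left; lia | right; by move: ev; rewrite jm /= negbK].
  rewrite jm dk q2e.
  have -> : (m.+2 + k - m.+2 = k)%N by lia.
  have -> : (m.+2 + k - 1 = m.+1 + k)%N by lia.
  have -> : (m.+2 + k - 2 = m + k)%N by lia.
  have -> : (m.+2 - 1 = m.+1)%N by lia.
  have -> : (m.+2 - 2 = m)%N by lia.
  have -> : 'C(m.+2, 2) = ('C(m, 2) + (m + m).+1)%N by rewrite !binS ?bin1 ?bin0; lia.
  have -> : 'C(m.+1, 2) = ('C(m, 2) + m)%N by rewrite !binS ?bin1 ?bin0; lia.
  rewrite mul2n -addnn -addnA.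
  have rel1 := ggrel (- 2%:R) (m + k)%N k (leq_addl m k).
  have rel2 := ggrel (- 2%:R) (m + k).+1 k (leqW (leq_addl m k)).
  rewrite (_ : ((m + k).+1 - k = m.+1)%N) in rel1; last lia.
  rewrite (_ : ((m + k).+2 - k = m.+2)%N) in rel2; last lia.
  rewrite -!addSn in rel1 rel2.
  have n1 : (- 2%:R : rat) ^+ m.+1 - 1 != 0 by apply: bpow_neq1.
  have n2 : (- 2%:R : rat) ^+ m.+2 - 1 != 0 by apply: bpow_neq1.
  have eg1 : gg (- 2%:R) (m.+1 + k) k =
      gg (- 2%:R) (m + k) k * ((- 2%:R) ^+ (m.+1 + k) - 1) / ((- 2%:R) ^+ m.+1 - 1).
    by rewrite -rel1 mulfK.
  have eg2 : gg (- 2%:R) (m.+2 + k) k =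
      gg (- 2%:R) (m.+1 + k) k * ((- 2%:R) ^+ (m.+2 + k) - 1) / ((- 2%:R) ^+ m.+2 - 1).
    by rewrite -rel2 mulfK.
  rewrite eg2 eg1.
  apply: (@abs_scale2 _ _
     ((- 2%:R) ^+ (m + m).+1 * ((- 2%:R) ^+ (m.+1 + k) - 1) * ((- 2%:R) ^+ (m.+2 + k) - 1))
     ((- 2%:R) ^+ (m + m).+1 * ((- 2%:R) ^+ (m.+1 + k) - 1) * ((- 2%:R) ^+ (m.+2 + k) - 1)
      + (- 2%:R) ^+ (m + (m.+2 + k)) * (- 2%:R + 1) * ((- 2%:R) ^+ (m.+1 + k) - 1) * ((- 2%:R) ^+ m.+2 - 1)
      + (- 2%:R) ^+ ((m.+2 + k) + (m.+2 + k)) * ((- 2%:R) ^+ m.+1 - 1) * ((- 2%:R) ^+ m.+2 - 1))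
     ((-1) ^+ m.+2 * (- 2%:R) ^+ 'C(m, 2) * gg (- 2%:R) (m + k) k)
     (((- 2%:R) ^+ m.+1 - 1) * ((- 2%:R) ^+ m.+2 - 1))).
  + by rewrite mulf_neq0.
  + apply: mulf_neq0; [apply: mulf_neq0; [exact: sgnz | exact: bnz] | apply: gg_neq0 => //; lia].
  + rewrite !(exprD _ (binomial m 2)).
    field; by apply/andP; split; first [exact: n1 | exact: n2].
  + rewrite !(exprD _ (binomial m 2)).
    field; by apply/andP; split; first [exact: n1 | exact: n2].
  + exact: ineq2.
Qed.
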